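(* Let $f$ be a $k$-term DNF over $x_1,\dots,x_n$ and let $\mathcal{F}$ be a set of eligible pairs that is fully expressive for $f$. Then $f$ can be written as an $\mathcal{F}$-augmented PTF of degree at most $d_{\max}=O(\sqrt{k}\log k)$ and weight at most $W_{\max}=2^{O(\sqrt{k}\log^2 k)}$.
   Context: Variables $x_i$ and terms take values in $\{0,1\}$; terms are sets of literals. An eligible pair is $(T',R_{T'})$ where $T'$ is a term (candidate stem) and $R_{T'}\subseteq[n]$ is disjoint from the variables occurring in $T'$. For a set $\mathcal{F}$ of eligible pairs (always assumed to contain a pair whose term is the empty term, i.e. the constant $1$), an $\mathcal{F}$-augmented monomial of degree $d$ is a product $T'\cdot\prod_{i\in S}x_i$ with $(T',R_{T'})\in\mathcal{F}$, $S\subseteq R_{T'}$ and $|S|\le d$. An $\mathcal{F}$-augmented PTF of degree $d$ and weight $W$ is a function $\mathbf{1}[p(x)\ge\theta]$ where $p$ is a linear combination, with integer coefficients whose absolute values sum to at most $W$, of $\mathcal{F}$-augmented monomials of degree at most $d$. A term $T'$ is a valid stem of a term $T$ if $T'\subseteq T$ and $|T\setminus T'|\le 2k$. $\mathcal{F}$ is fully expressive for $f$ if for every term $T_i$ of $f$ there is $(T',R_{T'})\in\mathcal{F}$ such that $T'$ is a valid stem of $T_i$ and every variable of $T_i\setminus T'$ lies in $R_{T'}$. *)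

(* Defs.v *)
From Stdlib Require Import ZArith Reals.
From mathcomp Require Import all_boot.
Set Implicit Arguments. Unset Strict Implicit. Unset Printing Implicit Defensive.

(* A literal over x_1..x_n: (i, b) means "x_i = b" (b = false is the negated literal). *)
Definition lit (n : nat) : finType := ('I_n * bool)%type.
Definition term (n : nat) := {set lit n}.

Definition lit_val n (x : 'I_n -> bool) (l : lit n) : bool := x l.1 == l.2.
Definition term_val n (x : 'I_n -> bool) (T : term n) : bool :=
  [forall l in T, lit_val x l].

Definition vars n (T : term n) : {set 'I_n} := [set l.1 | l in T].

Definition dnf_val n (f : seq (term n)) (x : 'I_n -> bool) : bool :=
  has (term_val x) f.

Definition eligible n (p : term n * {set 'I_n}) : Prop :=
  [disjoint p.2 & vars p.1].

(* T' is a valid stem of T (k the number of terms of the DNF) *)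
Definition valid_stem n (k : nat) (T' T : term n) : Prop :=
  T' \subset T /\ (#|T :\: T'| <= 2 * k)%N.

Definition fully_expressive n (k : nat) (F : {set term n * {set 'I_n}})
    (f : seq (term n)) : Prop :=
  forall T, T \in f -> exists2 p, p \in F &
    valid_stem k p.1 T /\ vars (T :\: p.1) \subset p.2.

(* An F-augmented polynomial: a list of (integer coefficient, (stem T', set S))
   standing for  sum c * T' * prod_{i in S} x_i. *)
Definition aug_poly n := seq (Z * (term n * {set 'I_n})).

Definition mono_val n (x : 'I_n -> bool) (m : term n * {set 'I_n}) : Z :=
  if term_val x m.1 && [forall i in m.2, x i] then 1%Z else 0%Z.

Definition poly_val n (p : aug_poly n) (x : 'I_n -> bool) : Z :=
  foldr (fun e acc => (e.1 * mono_val x e.2 + acc)%Z) 0%Z p.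

Definition poly_weight n (p : aug_poly n) : Z :=
  foldr (fun e acc => (Z.abs e.1 + acc)%Z) 0%Z p.

Definition aug_monos_of_degree n (F : {set term n * {set 'I_n}}) (d : nat)
    (p : aug_poly n) : Prop :=
  forall e, List.In e p -> exists R, (e.2.1, R) \in F /\
    e.2.2 \subset R /\ (#|e.2.2| <= d)%N.

Definition aug_PTF n (F : {set term n * {set 'I_n}}) (d : nat) (W : Z)
    (g : ('I_n -> bool) -> bool) : Prop :=
  exists (p : aug_poly n) (theta : R),
    aug_monos_of_degree F d p /\ (poly_weight p <= W)%Z /\
    forall x, g x = true <-> Rle theta (IZR (poly_val p x)).

(* Main.v *)
Require Import Defs.
From Stdlib Require Import ZArith Reals Lia Lra Psatz.
From mathcomp Require Import all_boot.

Set Implicit Arguments. Unset Strict Implicit. Unset Printing Implicit Defensive.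

Section Plain.
Variable n : nat.
Definition pp := seq (Z * {set 'I_n}).
Definition mv (x : 'I_n -> bool) (S : {set 'I_n}) : Z :=
  if [forall i in S, x i] then 1%Z else 0%Z.
Definition pv (p : pp) x : Z := foldr (fun e acc => (e.1 * mv x e.2 + acc)%Z) 0%Z p.
Definition pw (p : pp) : Z := foldr (fun e acc => (Z.abs e.1 + acc)%Z) 0%Z p.
Definition Rep (Rs : {set 'I_n}) (d : nat) (w : Z) (g : ('I_n -> bool) -> Z) :=
  exists p : pp, (forall e, List.In e p -> e.2 \subset Rs /\ (#|e.2| <= d)%N) /\
    (pw p <= w)%Z /\ forall x, pv p x = g x.

Lemma pw_ge0 p : (0 <= pw p)%Z.
Proof. elim: p => [|e p IH] /=; lia. Qed.

Lemma pv_cat p q x : pv (p ++ q) x = (pv p x + pv q x)%Z.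
Proof. elim: p => [|e p IH] /=; lia. Qed.
Lemma pw_cat p q : pw (p ++ q) = (pw p + pw q)%Z.
Proof. elim: p => [|e p IH] /=; lia. Qed.

Lemma forall_sub (x : 'I_n -> bool) (S : {set 'I_n}) :
  [forall i in S, x i] = (S \subset [set i | x i]).
Proof.
apply/forall_inP/subsetP => H i Hi; first by rewrite inE; apply: H.
by have := H i Hi; rewrite inE.
Qed.

Lemma mvU x S S' : mv x (S :|: S') = (mv x S * mv x S')%Z.
Proof. by rewrite /mv !forall_sub subUset; case: (_ \subset _); case: (_ \subset _). Qed.

Fixpoint mulp (p q : pp) : pp :=
  match p with
  | [::] => [::]
  | e :: p' => [seq (e.1 * e2.1, e.2 :|: e2.2)%Z | e2 <- q] ++ mulp p' q
  end.

Lemma pv_map c S q x :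
  pv [seq (c * e2.1, S :|: e2.2)%Z | e2 <- q] x = (c * mv x S * pv q x)%Z.
Proof. elim: q => [|e q IH] /=; first lia. rewrite IH mvU; ring. Qed.
Lemma pw_map c S q :
  pw [seq (c * e2.1, S :|: e2.2)%Z | e2 <- q] = (Z.abs c * pw q)%Z.
Proof. elim: q => [|e q IH] /=; first lia. rewrite IH Z.abs_mul; ring. Qed.

Lemma pv_mul p q x : pv (mulp p q) x = (pv p x * pv q x)%Z.
Proof. elim: p => [|e p IH] /=; first lia. rewrite pv_cat pv_map IH; ring. Qed.
Lemma pw_mul p q : pw (mulp p q) = (pw p * pw q)%Z.
Proof. elim: p => [|e p IH] /=; first lia. rewrite pw_cat pw_map IH; ring. Qed.

Lemma in_mulp e p q : List.In e (mulp p q) ->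
  exists e1 e2, List.In e1 p /\ List.In e2 q /\ e.2 = e1.2 :|: e2.2.
Proof.
elim: p => [|e1 p IH] //= /List.in_app_iff [|/IH [a [b [? [? ?]]]]].
  move=> /List.in_map_iff [e2 [<- H2]]. by exists e1, e2; split; [left|].
by exists a, b; split; [right|].
Qed.

Lemma Rep_ext Rs d w g g' : (forall x, g x = g' x) -> Rep Rs d w g -> Rep Rs d w g'.
Proof. move=> E [p [H1 [H2 H3]]]; exists p; split=> //; split=> // x; by rewrite H3. Qed.

Lemma Rep_mono Rs d d' w w' g : (d <= d')%N -> (w <= w')%Z -> Rep Rs d w g -> Rep Rs d' w' g.
Proof.
move=> Hd Hw [p [H1 [H2 H3]]]; exists p; split; last by split=> //; lia.
by move=> e /H1 [? ?]; split=> //; apply: leq_trans Hd.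
Qed.

Lemma Rep_add Rs d w1 w2 g1 g2 : Rep Rs d w1 g1 -> Rep Rs d w2 g2 ->
  Rep Rs d (w1 + w2) (fun x => g1 x + g2 x)%Z.
Proof.
move=> [p [H1 [H2 H3]]] [q [K1 [K2 K3]]]; exists (p ++ q); split.
  by move=> e /List.in_app_iff [/H1|/K1].
by rewrite pw_cat; split; [lia| move=> x; rewrite pv_cat H3 K3].
Qed.

Lemma Rep_mul Rs d1 d2 w1 w2 g1 g2 : Rep Rs d1 w1 g1 -> Rep Rs d2 w2 g2 ->
  Rep Rs (d1 + d2) (w1 * w2) (fun x => g1 x * g2 x)%Z.
Proof.
move=> [p [H1 [H2 H3]]] [q [K1 [K2 K3]]]; exists (mulp p q); split.
  move=> e /in_mulp [e1 [e2 [/H1 [A1 B1] [/K1 [A2 B2] ->]]]].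
  rewrite subUset A1 A2; split=> //.
  apply: leq_trans (leq_add B1 B2); rewrite cardsU; exact: leq_subr.
rewrite pw_mul; split; last by move=> x; rewrite pv_mul H3 K3.
have := pw_ge0 (p:=p); have := pw_ge0 (p:=q); nia.
Qed.

Lemma Rep_const Rs c : Rep Rs 0 (Z.abs c) (fun _ => c).
Proof.
exists [:: (c, set0)]; split.
  by move=> e [<-|//]; rewrite sub0set cards0.
split=> /=; first lia. move=> x; rewrite /mv.
have -> : [forall i in (set0 : {set 'I_n}), x i] by apply/forall_inP => i; rewrite inE.
lia.
Qed.

Lemma Rep_scale Rs d w c g : Rep Rs d w g -> Rep Rs d (Z.abs c * w) (fun x => c * g x)%Z.
Proof.
move=> H; have := Rep_mul (Rep_const Rs c) H; rewrite add0n.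
by apply: Rep_ext.
Qed.

Lemma Rep_var (Rs : {set 'I_n}) (j : 'I_n) : j \in Rs -> Rep Rs 1 1 (fun x => if x j then 1 else 0)%Z.
Proof.
move=> Hj; exists [:: (1%Z, [set j])]; split.
  by move=> e [<-|//]; rewrite sub1set Hj cards1.
split=> /=; first lia. move=> x; rewrite /mv.
have -> : [forall i in [set j], x i] = x j.
  apply/forall_inP/idP => [H|H i]; first by apply: H; rewrite inE.
  by rewrite inE => /eqP ->.
by case: (x j).
Qed.

Fixpoint zpow (b : Z) (a : nat) : Z := match a with 0 => 1%Z | S a => (b * zpow b a)%Z end.

Lemma Rep_pow Rs d w g L : Rep Rs d w g -> Rep Rs (d * L) (zpow w L) (fun x => zpow (g x) L).
Proof.
move=> H; elim: L => [|L IH] /=.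
  rewrite muln0; apply: Rep_ext (Rep_const Rs 1) => //.
rewrite mulnS; exact: Rep_mul H IH.
Qed.
End Plain.

Unset Implicit Arguments.

Fixpoint ch (M u : Z) (a : nat) : Z * Z :=
  match a with 0 => (1%Z, u)
  | S a' => let pq := ch M u a' in (pq.2, 2*u*pq.2 - M*M*pq.1)%Z end.

Lemma zpow_mul b c a : zpow (b * c) a = (zpow b a * zpow c a)%Z.
Proof. elim: a => [|a IH] /=; [lia| rewrite IH; ring]. Qed.
Lemma zpow_ge0 b a : (0 <= b)%Z -> (0 <= zpow b a)%Z.
Proof. move=> H; elim: a => [|a IH] /=; nia. Qed.
Lemma zpow_ge1 b a : (1 <= b)%Z -> (1 <= zpow b a)%Z.
Proof. move=> H; elim: a => [|a IH] /=; nia. Qed.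
Lemma zpow_le b c a : (0 <= b <= c)%Z -> (zpow b a <= zpow c a)%Z.
Proof.
move=> H; elim: a => [|a IH] /=; first lia.
have := zpow_ge0 b a (proj1 H); nia.
Qed.
Lemma zpow_mono b a a' : (1 <= b)%Z -> (a <= a')%N -> (zpow b a <= zpow b a')%Z.
Proof.
move=> H /subnKC <-; elim: (a' - a)%N => [|c IH]; first by rewrite addn0; lia.
rewrite addnS /=; have := zpow_ge1 b (a + c) H; nia.
Qed.

Lemma ch_Q M u a : let pq := ch M u a in
  (pq.2 * pq.2 - 2 * u * pq.2 * pq.1 + M * M * pq.1 * pq.1 = zpow (M*M) a * (M*M - u*u))%Z.
Proof.
elim: a => [|a IH]; cbn [ch zpow fst snd]; first ring.
move: IH; cbn zeta; case: (ch M u a) => p q; cbn [fst snd] => IH.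
transitivity (M * M * (q * q - 2 * u * q * p + M * M * p * p))%Z; first ring.
rewrite IH; ring.
Qed.

Lemma ch_upper M u a : (- M < u < M)%Z -> ((ch M u a).1 * (ch M u a).1 <= zpow (M*M) a)%Z.
Proof.
move=> H; have := ch_Q M u a; cbn zeta; case: (ch M u a) => p q; cbn [fst snd] => E.
have E2 : ((q - u * p) * (q - u * p) + (M*M - u*u) * (p * p) = zpow (M * M) a * (M * M - u * u))%Z.
  by rewrite -E; ring.
have D : (0 < M*M - u*u)%Z.
  have := Z.mul_pos_pos (M-u) (M+u); lia.
have S := Z.square_nonneg (q - u * p).
have E3 : ((M*M - u*u) * (p * p) <= (M * M - u * u) * zpow (M * M) a)%Z by lia.
apply: (Zmult_le_reg_r _ _ (M*M - u*u)); first lia.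
rewrite (Z.mul_comm (p*p)) (Z.mul_comm (zpow _ _)); exact: E3.
Qed.

Lemma ch_lower M a : (1 <= M)%Z ->
  (M * (ch M (M+1) a).1 >= zpow M a * (M + Z.of_nat a * Z.of_nat a))%Z /\
  ((ch M (M+1) a).2 - M * (ch M (M+1) a).1 >= zpow M a * (2 * Z.of_nat a + 1))%Z.
Proof.
move=> HM; elim: a => [|a IH]; cbn [ch zpow fst snd]; first lia.
move: IH; case: (ch M (M+1) a) => p q; cbn [fst snd] => -[H1 H2].
have P := zpow_ge1 M a HM.
rewrite Nat2Z.inj_succ.
have H3 : (M * q >= M * zpow M a * (M + (Z.of_nat a + 1) * (Z.of_nat a + 1)))%Z by nia.
split; first by nia.
have Hq : (q >= M * zpow M a)%Z by nia.
nia.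
Qed.


Lemma Rep_ch n (Rs : {set 'I_n}) wu (u : ('I_n -> bool) -> Z) M B :
  Rep Rs 1 wu u -> (0 <= M)%Z -> (1 <= B)%Z -> (wu <= B)%Z -> (2 * wu + M * M <= B)%Z ->
  forall a, Rep Rs a (zpow B a) (fun x => (ch M (u x) a).1) /\
            Rep Rs a.+1 (zpow B a.+1) (fun x => (ch M (u x) a).2).
Proof.
move=> Hu HM HB1 HB2 HB3; elim=> [|a [IH1 IH2]].
  split; first by apply: Rep_ext (Rep_const Rs 1).
  by apply: Rep_mono Hu => //=; lia.
split; first by [].
have K1 := Rep_mul (Rep_scale 2 Hu) IH2.
have K2 := Rep_scale (- (M * M)) IH1.
have K2' := Rep_mono (d' := (1 + a.+1)%N) (w' := (Z.abs (- (M * M)) * zpow B a)%Z) (leq_trans (leqnSn a) (leq_addl 1 a.+1)) (Z.le_refl _) K2.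
have K := Rep_add K1 K2'.
eapply Rep_ext; last first.
  eapply Rep_mono; last exact: K.
    by rewrite add1n.
  have P := zpow_ge1 B a HB1.
  have E : Z.abs (- (M * M)) = (M * M)%Z by nia.
  rewrite E; cbn [zpow].
  have Hwu : (0 <= wu)%Z.
    case: Hu => p [_ [Hp _]]; have := pw_ge0 (p:=p); lia.
  have h0 : (M * M <= M * M * B)%Z by nia.
  have h1 : (2 * wu * B + M * M <= B * B)%Z by nia.
  have h2 := Z.mul_le_mono_nonneg_r _ _ (zpow B a) ltac:(lia) h1.
  change (Z.abs 2) with 2%Z. nia.
move=> x; cbn [ch fst snd]; ring.
Qed.


Lemma Rep_lit n (Rs : {set 'I_n}) (l : lit n) : l.1 \in Rs ->
  Rep Rs 1 2 (fun x => Z.of_nat (lit_val x l)).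
Proof.
case: l => j b /= Hj; rewrite /lit_val /=.
case: b.
  eapply Rep_ext; last first.
    eapply Rep_mono; last exact: (Rep_var Hj). by []. lia.
  by move=> x /=; case: (x j).
have K1 : Rep Rs 1 1 (fun _ => 1%Z) by apply: Rep_mono (Rep_const Rs 1).
have K := Rep_add K1
                  (Rep_scale (-1) (Rep_var Hj)).
apply: Rep_ext (K) => x /=; by case: (x j).
Qed.

Lemma Rep_count n (Rs : {set 'I_n}) (r : seq (lit n)) : (forall l, l \in r -> l.1 \in Rs) ->
  Rep Rs 1 (2 * Z.of_nat (size r)) (fun x => Z.of_nat (count (lit_val x) r)).
Proof.
elim: r => [|l r IH] H.
  by apply: Rep_mono (Rep_const Rs 0) => //.
have K := Rep_add (@Rep_lit n Rs l (H l (mem_head l r))) (IH (fun l' Hl' => H l' (@mem_behead _ (l :: r) l' Hl'))).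
eapply Rep_ext; last first.
  eapply Rep_mono; last exact: K. by []. change (size (l :: r)) with (size r).+1; rewrite Nat2Z.inj_succ; lia.
by move=> x /=; rewrite Nat2Z.inj_add.
Qed.

Lemma term_val_split n (T T' : term n) x : T' \subset T ->
  term_val x T = term_val x T' && all (lit_val x) (enum (T :\: T')).
Proof.
move=> /subsetP Hs; rewrite /term_val.
apply/forall_inP/andP => [H|[/forall_inP H1 /allP H2] l Hl].
  split; first by apply/forall_inP => l Hl; apply: H; apply: Hs.
  by apply/allP => l; rewrite mem_enum inE => /andP [_ ?]; apply: H.
case: (boolP (l \in T')) => [/H1 //|Hn]; apply: H2; by rewrite mem_enum inE Hn Hl.
Qed.

From mathcomp Require Import zify.

Definition Mz (k : nat) : Z := Z.of_nat (2 * k + 1).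
Definition Bz (k : nat) : Z := (Mz k * Mz k + 10 * Mz k)%Z.
Definition Mp (k a L : nat) : Z := zpow (zpow (Mz k * Mz k) a) L.
Definition Wt (k a L : nat) : Z := zpow (zpow (Bz k) a * zpow (Bz k) a) L.

Lemma term_poly n (k a L : nat) (T T' : term n) (Rs : {set 'I_n}) :
  T' \subset T -> (#|T :\: T'| <= 2 * k)%N -> vars (T :\: T') \subset Rs ->
  (2 * k + 1 <= a * a)%N ->
  exists q : pp n, (forall e, List.In e q -> e.2 \subset Rs /\ (#|e.2| <= (a + a) * L)%N) /\
   (pw q <= Wt k a L)%Z /\
   forall x, let G := ((if term_val x T' then 1 else 0) * pv q x)%Z in
     (term_val x T -> (zpow 4 L * Mp k a L <= G)%Z) /\
     (~~ term_val x T -> (0 <= G <= Mp k a L)%Z).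
Proof.
move=> HT Hm Hv Ha.
set r := enum (T :\: T').
have Hsz : size r = #|T :\: T'| by rewrite cardE.
have Hr : forall l, l \in r -> l.1 \in Rs.
  move=> l; rewrite mem_enum => Hl; apply: (subsetP Hv); exact: imset_f.
have Hm' : (0 <= Z.of_nat (size r) <= 2 * Z.of_nat k)%Z by rewrite Hsz; lia.
move Em : (Z.of_nat (size r)) => m.
set M := Mz k.
have HM : M = (2 * Z.of_nat k + 1)%Z by rewrite /M /Mz; lia.
have Hs := @Rep_count n Rs r Hr.
have Hu0 := Rep_add (Rep_scale 2 Hs) (Rep_mono (d' := 1%N) (w' := Z.abs (M + 1 - 2 * m)) (leq0n 1) (Z.le_refl _) (Rep_const Rs (M + 1 - 2 * m))).
set u := (fun x => 2 * Z.of_nat (count (lit_val x) r) + (M + 1 - 2 * m))%Z.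
have Hu : Rep Rs 1 (4 * m + M + 1) u.
  apply: Rep_mono Hu0 => //. change (Z.abs 2) with 2%Z. lia.
have HMz : Mz k = (2 * Z.of_nat k + 1)%Z by rewrite /Mz; lia.
have [Hp _] := @Rep_ch n Rs _ u M (Bz k) Hu ltac:(lia) ltac:(rewrite /Bz; nia) ltac:(rewrite /Bz; nia)
   ltac:(rewrite /Bz; nia) a.
have Hpp := Rep_pow L (Rep_mul Hp Hp).
case: Hpp => q [Q1 [Q2 Q3]].
exists q; split=> //; split=> // x; cbn zeta.
rewrite Q3 (@term_val_split n T T' x HT).
have Hc := count_size (lit_val x) r.
set p := (ch M (u x) a).1.
case: (term_val x T'); rewrite ?Z.mul_1_l ?Z.mul_0_l /=; last first.
  split=> // _; split; first lia; rewrite /Mp; apply: zpow_ge0; apply: zpow_ge0; nia.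
case: (boolP (all (lit_val x) r)) => Hall.
  split=> // _.
  have Eu : u x = (M + 1)%Z.
    move: Hall; rewrite all_count => /eqP Ec. rewrite /u Ec; lia.
  have [L1 _] := ch_lower M a ltac:(lia).
  rewrite -Eu -/p in L1.
  have Pz := zpow_ge1 M a ltac:(lia).
  have Ha' : (M <= Z.of_nat a * Z.of_nat a)%Z by rewrite HM; lia.
  have Hp2 : (2 * zpow M a <= p)%Z by nia.
  have Hpp : (4 * zpow (M * M) a <= p * p)%Z by rewrite zpow_mul; nia.
  rewrite /Mp -zpow_mul; apply: zpow_le; split=> //.
  rewrite -/M; have := zpow_ge0 (M*M) a ltac:(nia); lia.
split=> // _.
have Hlt : (count (lit_val x) r < size r)%N.
  by rewrite ltn_neqAle Hc andbT; move: Hall; rewrite all_count.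
have Hub := ch_upper M (u x) a ltac:(rewrite /u; lia).
rewrite -/p in Hub.
rewrite /Mp; split; first exact: zpow_ge0 _ _ (Z.square_nonneg p).
apply: zpow_le; split=> //; exact: Z.square_nonneg.
Qed.

Set Implicit Arguments.

Definition attach n (T' : term n) (q : pp n) : aug_poly n := [seq (e.1, (T', e.2)) | e <- q].

Lemma attach_val n (T' : term n) q x :
  poly_val (attach T' q) x = ((if term_val x T' then 1 else 0) * pv q x)%Z.
Proof.
elim: q => [|e q IH]; first by rewrite /= Z.mul_0_r.
rewrite /attach /= -/(attach T' q) IH /mono_val /mv /=.
case: (term_val x T'); case: [forall i in e.2, x i]; cbv iota beta; simpl andb; ring.
Qed.

Lemma attach_weight n (T' : term n) q : poly_weight (attach T' q) = pw q.
Proof. elim: q => [|e q IH] //=. by rewrite -/(attach T' q) IH. Qed.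

Lemma poly_val_cat n (p q : aug_poly n) x : poly_val (p ++ q) x = (poly_val p x + poly_val q x)%Z.
Proof. elim: p => [|e p IH] /=; [lia| rewrite IH; lia]. Qed.
Lemma poly_weight_cat n (p q : aug_poly n) : poly_weight (p ++ q) = (poly_weight p + poly_weight q)%Z.
Proof. elim: p => [|e p IH] /=; [lia| rewrite IH; lia]. Qed.

Lemma Mp_ge0 k a L : (0 <= Mp k a L)%Z.
Proof. rewrite /Mp; apply: zpow_ge0; apply: zpow_ge0; rewrite /Mz; nia. Qed.

Lemma list_poly n k a L (F : {set term n * {set 'I_n}}) (f : seq (term n)) :
  (2 * k + 1 <= a * a)%N ->
  (forall T, T \in f -> exists2 p, p \in F & valid_stem k p.1 T /\ vars (T :\: p.1) \subset p.2) ->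
  exists P : aug_poly n, aug_monos_of_degree F ((a + a) * L) P /\
    (poly_weight P <= Z.of_nat (size f) * Wt k a L)%Z /\
    forall x, (0 <= poly_val P x)%Z /\
      (dnf_val f x -> (zpow 4 L * Mp k a L <= poly_val P x)%Z) /\
      (~~ dnf_val f x -> (poly_val P x <= Z.of_nat (size f) * Mp k a L)%Z).
Proof.
move=> Ha; elim: f => [|T f IH] Hf.
  exists [::]; split; first by move=> e [].
  split=> //= x; split=> //; split=> //.
have [P [P1 [P2 P3]]] := IH (fun T' HT' => Hf T' (@mem_behead _ (T :: f) T' HT')).
have [[T' Rs] HF [[HT Hm] Hv]] := Hf T (mem_head T f).
have [q [Q1 [Q2 Q3]]] := @term_poly n k a L T T' Rs HT Hm Hv Ha.
exists (attach T' q ++ P); split.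
  move=> e /List.in_app_iff [|/P1 //].
  move=> /List.in_map_iff [e' [<- He']]; exists Rs; split=> //; exact: Q1.
rewrite poly_weight_cat attach_weight; split.
  change (size (T :: f)) with (size f).+1; rewrite Nat2Z.inj_succ; lia.
move=> x; rewrite poly_val_cat attach_val.
change (size (T :: f)) with (size f).+1; rewrite Nat2Z.inj_succ.
have [A1 [A2 A3]] := P3 x.
have [B1 B2] := Q3 x.
have Hm0 := @Mp_ge0 k a L.
have H4 := zpow_ge0 4 L ltac:(lia).
rewrite /dnf_val /= -/(dnf_val f x).
case: (boolP (term_val x T)) => Ht /=.
  have := B1 Ht; have := B2; split; first nia.
  split=> // _; nia.
have [C1 C2] := B2 Ht.
split; first lia.
split; first by move=> /A2; lia.
move=> /A3; lia.
Qed.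

Unset Implicit Arguments.
Section RealB.
Local Open Scope R_scope.

Lemma ln_le' x y : (0 < x) -> (x <= y) -> (ln x <= ln y).
Proof.
move=> H1 H2; case: (Rle_lt_or_eq_dec _ _ H2) => H.
  by apply: Rlt_le; apply: ln_increasing.
by rewrite H; apply: Rle_refl.
Qed.

Lemma IZR_zpow b a : IZR (zpow b a) = (IZR b ^ a).
Proof. elim: a => [|a IH] //=. by rewrite mult_IZR IH. Qed.

Lemma real_bounds k a L : (39 <= k)%N -> a = (Nat.sqrt (2 * k + 1)%N).+1 -> L = (Nat.log2 k).+1 ->
  (INR ((a + a) * L) <= 200 * sqrt (INR k) * ln (INR k)) /\
  (IZR (Z.of_nat k * Wt k a L) <= Rpower 2 (200 * sqrt (INR k) * ln (INR k) ^ 2)).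
Proof.
move=> Hk Ea EL.
set K := INR k.
have HK : (39 <= K) by rewrite /K; replace 39 with (INR 39); [apply: le_INR; lia | simpl; lra].
set s := sqrt K.
have Hs0 : (0 <= s) by apply: sqrt_pos.
have Hss : (s * s = K) by apply: sqrt_sqrt; lra.
have Hs1 : (1 <= s) by nra.
set l := ln K.
have Hl1 : (1 <= l).
  rewrite -[1]ln_exp; apply: ln_le'; first exact: exp_pos.
  have := exp_le_3; lra.
have Ha : (INR a <= 3 * s).
  rewrite Ea S_INR.
  have := Nat.sqrt_spec (2 * k + 1) (le_0_n _).
  move: (Nat.sqrt _) => q [Hq _].
  have Hq' : (INR q * INR q <= 2 * K + 1).
    rewrite -mult_INR /K. have E2 : (2 * INR k + 1) = INR (2 * k + 1) by rewrite plus_INR mult_INR; simpl; lra.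
    rewrite E2; apply: le_INR; exact: Hq.
  have Hq0 := pos_INR q.
  nra.
have HL : (INR L <= 3 * l).
  rewrite EL S_INR.
  have [Hj _] := Nat.log2_spec k ltac:(lia).
  move: (Nat.log2 k) Hj => j Hj.
  have H2 : (2 ^ j <= K).
    have -> : 2 ^ j = INR (Nat.pow 2 j) by rewrite pow_INR.
    by apply: le_INR.
  have H3 : (INR j * ln 2 <= l).
    rewrite -ln_pow; last lra.
    apply: ln_le' => //; apply: pow_lt; lra.
  have := ln_lt_2; have := pos_INR j. nra.
have Hd : INR ((a + a) * L) = (INR a + INR a) * INR L by rewrite mult_INR plus_INR.
have Ha0 := pos_INR a. have HL0 := pos_INR L.
set D := INR ((a + a) * L).
have HD : D <= 18 * s * l.
  rewrite /D Hd. have := Rmult_le_compat (INR a + INR a) (3*s+3*s) (INR L) (3*l) ltac:(lra) HL0 ltac:(lra) HL. lra.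
split; first by nra.
set b := IZR (Bz k).
have Hb : b = (2 * K + 1) * (2 * K + 1) + 10 * (2 * K + 1).
  rewrite /b /Bz /Mz plus_IZR !mult_IZR -INR_IZR_INZ plus_INR mult_INR /K; simpl; lra.
have Hb1 : 1 <= b by nra.
have Hb3 : b <= K ^ 3 by rewrite Hb; simpl; nra.
have Hlb : 0 <= ln b <= 3 * l.
  split; first by rewrite -ln_1; apply: ln_le'; lra.
  have E3 : 3 * l = ln (K ^ 3) by rewrite ln_pow; [rewrite /l; simpl; lra | lra].
  rewrite E3; apply: ln_le'; lra.
have EW : IZR (Z.of_nat k * Wt k a L) = exp (ln K + D * ln b).
  rewrite exp_plus exp_ln; last lra.
  rewrite /D -ln_pow; last lra.
  rewrite exp_ln; last by apply: pow_lt; lra.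
  rewrite mult_IZR -INR_IZR_INZ /Wt IZR_zpow mult_IZR !IZR_zpow -/b -pow_add -pow_mult //.
rewrite EW /Rpower.
have Hexp : forall x y, x <= y -> exp x <= exp y.
  move=> x y Hxy; case: (Rle_lt_or_eq_dec _ _ Hxy) => H.
    by apply: Rlt_le; apply: exp_increasing.
  by rewrite H; apply: Rle_refl.
apply: Hexp.
have H1 : D * ln b <= (18 * s * l) * (3 * l).
  apply: Rmult_le_compat; [rewrite /D; apply: pos_INR | lra | lra | lra].
have H2 : l <= s * l * l by nra.
have H3 := ln_lt_2.
have H4 : 0 <= s * l * l by nra.
rewrite -/l (_ : l ^ 2 = l * l); last by ring.
have H5 : 100 * (s * l * l) <= 200 * (s * l * l) * ln 2 by nra.
lra.
Qed.

End RealB.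

Theorem lemma5p5 :
  exists (C : R) (k0 : nat), Rlt 0 C /\
  forall (k n : nat), (k0 <= k)%N ->
  forall (f : seq (term n)) (F : {set term n * {set 'I_n}}),
    size f = k ->
    (forall p, p \in F -> eligible p) ->
    (exists R0, (set0, R0) \in F) ->
    fully_expressive k F f ->
    exists (d : nat) (W : Z),
      Rle (INR d) (Rmult (Rmult C (sqrt (INR k))) (ln (INR k))) /\
      Rle (IZR W) (Rpower 2 (Rmult (Rmult C (sqrt (INR k))) (pow (ln (INR k)) 2))) /\
      aug_PTF F d W (dnf_val f).
Proof.
exists (IZR 200), 39%N; split; first by apply: IZR_lt; lia.
move=> k n Hk f F Hsize _ _ Hfe.
set a := (Nat.sqrt (2 * k + 1)%N).+1.
set L := (Nat.log2 k).+1.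
have [R1 R2] := @real_bounds k a L Hk erefl erefl.
have Ha : (2 * k + 1 <= a * a)%N.
  have := Nat.sqrt_spec (2 * k + 1) (le_0_n _). rewrite /a. move: (Nat.sqrt _) => q [_ Hq]. lia.
have [P [P1 [P2 P3]]] := @list_poly n k a L F f Ha Hfe.
exists ((a + a) * L)%N, (Z.of_nat k * Wt k a L)%Z.
split; first exact: R1.
split; first exact: R2.
exists P, (IZR (Z.of_nat k * Mp k a L + 1)).
split; first exact: P1.
split; first by rewrite Hsize in P2.
have HMp : (1 <= Mp k a L)%Z by rewrite /Mp; apply: zpow_ge1; apply: zpow_ge1; rewrite /Mz; nia.
have H4 : (Z.of_nat k + 1 <= zpow 4 L)%Z.
  have [_ Hj] := Nat.log2_spec k ltac:(lia).
  have E2 : forall j, Z.of_nat (Nat.pow 2 j) = zpow 2 j.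
    elim=> [|j IH] //. rewrite Nat.pow_succ_r' Nat2Z.inj_mul IH; cbn [zpow]; lia.
  have := zpow_le 2 4 L ltac:(lia).
  rewrite -E2 /L. lia.
move=> x; have [A1 [A2 A3]] := P3 x.
rewrite Hsize in A3.
split.
  move=> /A2 H; apply: IZR_le. nia.
move=> /le_IZR H.
case: (boolP (dnf_val f x)) => // /A3; lia.
Qed.
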